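(* Let $k\ge 2$, let $a_1\ge a_2\ge\cdots\ge a_k\ge 1$ be integers, and put $t=\sum_{i=1}^k a_i$. Let $G$ be a graph of order $n>t^2-t-1$ which does not contain the disjoint union $\bigcup_{i=1}^k P_{2a_i}$ as a subgraph. If $e(G)\ge (t-1)n-(t^2-t-1)$, then there exists an induced subgraph $H$ of $G$ such that $|V(H)|\ge n-(t^2-t-1)$, $\delta(H)\ge t-1$, and $d_H(v)\le t-2$ for every vertex $v\in V(G)\setminus V(H)$.
   Context: All graphs are finite and simple. $P_m$ is the path on $m$ vertices, $e(G)$ is the number of edges of $G$, $\delta(H)$ the minimum degree of $H$, and $d_H(v)=|N(v)\cap V(H)|$ is the number of neighbours of $v$ lying in $V(H)$. *)

(* Defs.v *)
From mathcomp Require Import all_boot.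
Set Implicit Arguments.
Unset Strict Implicit.
Unset Printing Implicit Defensive.

(* A simple graph on a finite vertex type T is a symmetric irreflexive
   relation e : rel T (these properties are hypotheses of the theorem). *)

Definition num_edges (T : finType) (e : rel T) : nat :=
  #|[set A : {set T} | [exists x, [exists y, (A == [set x; y]) && e x y]]]|.

Definition deg_in (T : finType) (e : rel T) (S : {set T}) (v : T) : nat :=
  #|[set u in S | e v u]|.

(* G contains the disjoint union of paths P_{2 a_0}, ..., P_{2 a_(k-1)} as a
   (not necessarily induced) subgraph: there are k vertex sequences, the i-th
   of length 2 a_i, consecutive vertices adjacent, all vertices pairwise distinct. *)
Definition contains_path_forest (T : finType) (e : rel T) (k : nat) (a : nat -> nat) : Prop :=
  exists ps : seq (seq T),
    [/\ size ps = k,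
        (forall i, i < k -> size (nth [::] ps i) = (a i).*2 /\ sorted e (nth [::] ps i))
      & uniq (flatten ps)].

(* Main.v *)
Require Import Defs.
From mathcomp Require Import all_boot zify.
From Stdlib Require Classical_Prop.
Set Implicit Arguments.
Unset Strict Implicit.
Unset Printing Implicit Defensive.

Definition Ds (T : finType) (e : rel T) (S : {set T}) : nat :=
  \sum_(x in S) deg_in e S x.

Lemma sumb (T : finType) (A : {set T}) (P : pred T) :
  \sum_(y in A) (P y : nat) = #|[set y in A | P y]|.
Proof.
rewrite -sum1_card big_mkcond [RHS]big_mkcond /=.
by apply: eq_bigr => y _; rewrite inE; case: (y \in A); case: (P y).
Qed.

Lemma deg_sub (T : finType) (e : rel T) (A B : {set T}) v :
  A \subset B -> deg_in e A v <= deg_in e B v.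
Proof.
move=> sAB; apply: subset_leq_card; apply/subsetP => u; rewrite !inE.
by case/andP => uA ->; rewrite (subsetP sAB u uA).
Qed.

Lemma deg_le (T : finType) (e : rel T) (e_irr : irreflexive e) (S : {set T}) v :
  deg_in e S v <= #|S :\ v|.
Proof.
apply: subset_leq_card; apply/subsetP => u; rewrite !inE.
case/andP => uS evu; rewrite uS andbT; apply/eqP => uv; subst u.
by rewrite e_irr in evu.
Qed.

Lemma deg_del (T : finType) (e : rel T) (S : {set T}) v x :
  deg_in e S x = (e x v && (v \in S)) + deg_in e (S :\ v) x.
Proof.
rewrite /deg_in (cardsD1 v) inE andbC; congr addn.
by apply: eq_card => u; rewrite !inE andbA.
Qed.

Lemma Ds_del (T : finType) (e : rel T) (e_sym : symmetric e) (e_irr : irreflexive e)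
  (S : {set T}) v : v \in S -> Ds e S = Ds e (S :\ v) + (deg_in e S v).*2.
Proof.
move=> vS; rewrite /Ds (big_setD1 v vS) /=.
rewrite (eq_bigr (fun x => (e x v : nat) + deg_in e (S :\ v) x)); last first.
  by move=> x _; rewrite (deg_del e S v x) vS andbT.
rewrite big_split /= sumb -addnn.
have -> : #|[set y in S :\ v | e y v]| = deg_in e S v.
  apply: eq_card => u; rewrite !inE e_sym.
  case: (eqVneq u v) => [->|]; first by rewrite e_irr !andbF.
  by [].
lia.
Qed.

Lemma handshake (T : finType) (e : rel T) (e_sym : symmetric e) (e_irr : irreflexive e) :
  (num_edges e).*2 <= Ds e setT.
Proof.
set G := [set p : T * T | e p.1 p.2].
have HG : #|G| = Ds e setT.
  rewrite /Ds -sum1_card big_mkcond /=.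
  under eq_bigr => p _ do rewrite inE.
  rewrite -(pair_bigA _ (fun x y => if e x y then 1 else 0)) /=.
  rewrite [RHS]big_mkcond /=; apply: eq_bigr => x _; rewrite inE /deg_in -sumb.
  rewrite [RHS]big_mkcond /=.
  by apply: eq_bigr => y _; rewrite inE; case: (e x y).
set L := [set p in G | enum_rank p.1 < enum_rank p.2].
set sw := fun p : T * T => (p.2, p.1).
have swK : cancel sw sw by case.
set L' := [set sw p | p in L].
have HL' : #|L'| = #|L| by rewrite card_imset //; exact: can_inj swK.
have HLL : L :&: L' = set0.
  apply/setP => p; rewrite !inE; apply/negbTE/negP => /andP[].
  move=> /andP[_ H1] /imsetP[q]; rewrite !inE => /andP[_ H2] Hp; subst p.
  by move: H1 H2 => /=; lia.
have HU : L :|: L' \subset G.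
  apply/subsetP => p; rewrite inE => /orP[]; first by rewrite inE => /andP[].
  by case/imsetP => q; rewrite !inE => /andP[H _] -> /=; rewrite e_sym.
have HE : num_edges e <= #|L|.
  apply: (leq_trans _ (leq_imset_card (fun p : T * T => [set p.1; p.2]) (mem L))).
  apply: subset_leq_card; apply/subsetP => A; rewrite inE.
  case/existsP => x /existsP[y] /andP[/eqP -> exy].
  have xy : x != y by apply/eqP => xy; subst y; rewrite e_irr in exy.
  have : enum_rank x != enum_rank y by apply: contra xy => /eqP/enum_rank_inj ->.
  rewrite neq_ltn => /orP[] H.
    by apply/imsetP; exists (x, y) => //; rewrite !inE exy.
  by apply/imsetP; exists (y, x) => //=; [rewrite !inE e_sym exy | rewrite setUC].
have := subset_leq_card HU; rewrite cardsU HLL cards0 subn0 HL' -HG; lia.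
Qed.

Lemma sorted_catP (T : Type) (e : rel T) x (u w : seq T) :
  0 < size u -> 0 < size w ->
  sorted e (u ++ w) = [&& sorted e u, e (last x u) (head x w) & sorted e w].
Proof.
case: u => [//|a u] _; case: w => [//|b w] _ /=.
by rewrite cat_path /=.
Qed.

Lemma sorted_rev_sym (T : Type) (e : rel T) (e_sym : symmetric e) s :
  sorted e (rev s) = sorted e s.
Proof.
rewrite rev_sorted; case: s => //= a s; apply: eq_path => x y; exact: e_sym.
Qed.

Lemma head_rev (T : Type) (x : T) s : head x (rev s) = last x s.
Proof. by case/lastP: s => //= s y; rewrite rev_rcons last_rcons. Qed.

Lemma last_rev (T : Type) (x : T) s : last x (rev s) = head x s.
Proof. by case: s => //= a s; rewrite rev_cons last_rcons. Qed.

Lemma cycle_sorted (T : Type) (e : rel T) x c :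
  0 < size c -> cycle e c = sorted e (rcons c (head x c)).
Proof. by case: c. Qed.

Lemma cycle_build (T : Type) (e : rel T) (e_sym : symmetric e) (p : seq T) x0 i :
  sorted e p -> i.+1 < size p -> e (head x0 p) (nth x0 p i.+1) ->
  e (nth x0 p i) (last x0 p) ->
  cycle e (take i.+1 p ++ rev (drop i.+1 p)).
Proof.
move=> sp hi e1 e2.
have sz1 : size (take i.+1 p) = i.+1 by rewrite size_take hi.
have s1n : 0 < size (take i.+1 p) by rewrite sz1.
have s2n : 0 < size (drop i.+1 p) by rewrite size_drop; lia.
have r2n : 0 < size (rev (drop i.+1 p)) by rewrite size_rev size_drop; lia.
have hs1 : head x0 (take i.+1 p) = head x0 p by case: p {sp hi e1 e2 sz1 s1n s2n r2n}.
have ls1 : last x0 (take i.+1 p) = nth x0 p i by rewrite -nth_last sz1 nth_take.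
have hs2 : head x0 (drop i.+1 p) = nth x0 p i.+1 by rewrite -nth0 nth_drop addn0.
have ls2 : last x0 (drop i.+1 p) = last x0 p.
  rewrite -!nth_last nth_drop size_drop; congr nth; lia.
rewrite (cycle_sorted _ x0); last by rewrite size_cat; lia.
have -> : head x0 (take i.+1 p ++ rev (drop i.+1 p)) = head x0 p.
  by rewrite -hs1; case: (take i.+1 p) s1n.
rewrite rcons_cat -cats1 (sorted_catP _ x0) //; last by rewrite size_cat; lia.
rewrite take_sorted //=.
have -> : head x0 (rev (drop i.+1 p) ++ [:: head x0 p]) = last x0 p.
  by rewrite -ls2 -head_rev; case: (rev _) r2n.
rewrite ls1 e2 /= (sorted_catP _ x0) // sorted_rev_sym // drop_sorted //= andbT.
by rewrite last_rev hs2 e_sym.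
Qed.

Lemma path_ext (T : finType) (e : rel T) (e_sym : symmetric e) (e_irr : irreflexive e)
  (S : {set T}) (t : nat)
  (Hdeg : forall v, v \in S -> t <= deg_in e S v)
  (Hconn : forall C : {set T}, C \subset S -> C != set0 -> C != S ->
           exists x y, [/\ x \in C, y \in S :\: C & e x y])
  (p : seq T) : uniq p -> sorted e p -> {subset p <= S} -> 0 < size p ->
  size p < t.*2 -> size p < #|S| ->
  exists p' : seq T, [/\ uniq p', sorted e p', {subset p' <= S} & size p' = (size p).+1].
Proof.
case: p => [//|x0 q] up sp pS _ hszt hszS.
set p := x0 :: q in up sp pS hszt hszS *.
set z := last x0 q.
case: (boolP [exists y in S, (y \notin p) && e z y]).
  case/existsP => y /andP[yS /andP[ynp ezy]].
  exists (rcons p y); split.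
  - by rewrite rcons_uniq ynp.
  - by rewrite /= rcons_path; move: sp => /= ->.
  - by move=> u; rewrite mem_rcons inE => /orP[/eqP ->|/pS].
  - by rewrite size_rcons.
move=> HNz.
case: (boolP [exists y in S, (y \notin p) && e x0 y]).
  case/existsP => y /andP[yS /andP[ynp ezy]].
  exists (y :: p); split.
  - by rewrite /= ynp.
  - by move: sp => /= ->; rewrite andbT e_sym.
  - by move=> u; rewrite inE => /orP[/eqP ->|/pS].
  - by [].
move=> HN0.
have HN0' : forall u, u \in S -> e x0 u -> u \in p.
  move=> u uS eu; apply/negPn/negP => unp; case/negP: HN0.
  by apply/existsP; exists u; rewrite uS unp eu.
have HNz' : forall u, u \in S -> e z u -> u \in p.
  move=> u uS eu; apply/negPn/negP => unp; case/negP: HNz.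
  by apply/existsP; exists u; rewrite uS unp eu.
set l := size q.
have hzl : nth x0 p l = z by rewrite /z (_ : last x0 q = last x0 p) // -nth_last.
set A := [set j : 'I_l | e x0 (nth x0 p j.+1)].
set B := [set j : 'I_l | e (nth x0 p j) z].
have hA : t <= #|A|.
  apply: (leq_trans (Hdeg x0 (pS x0 (mem_head _ _)))).
  apply: (leq_trans _ (leq_imset_card (fun j : 'I_l => nth x0 p j.+1) (mem A))).
  apply: subset_leq_card; apply/subsetP => u; rewrite inE => /andP[uS eu].
  have up' := HN0' u uS eu.
  have hi : index u p < size p by rewrite index_mem.
  have hu := nth_index x0 up'.
  move: hi hu; case Hj: (index u p) => [|j] hi hu.
    by move: eu; rewrite -hu /= e_irr.
  have jl : j < l by move: hi; rewrite /= /l; lia.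
  apply/imsetP; exists (Ordinal jl) => //=.
  by rewrite !inE /=; move: hu => /= ->.
have hB : t <= #|B|.
  apply: (leq_trans (Hdeg z (pS z _))); first by rewrite /z mem_last.
  apply: (leq_trans _ (leq_imset_card (fun j : 'I_l => nth x0 p j) (mem B))).
  apply: subset_leq_card; apply/subsetP => u; rewrite inE => /andP[uS eu].
  have up' := HNz' u uS eu.
  have hi : index u p < size p by rewrite index_mem.
  have hu := nth_index x0 up'.
  have jl : index u p < l.
    move: hi; rewrite [size p]/= -/l ltnS leq_eqVlt => /orP[/eqP Hj|//].
    by move: eu; rewrite -hu Hj hzl e_irr.
  apply/imsetP; exists (Ordinal jl) => //=.
  by rewrite inE /= hu e_sym.
have : 0 < #|A :&: B|.
  have := max_card (mem (A :|: B)); rewrite card_ord cardsU.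
  move: hszt; rewrite [size p]/= -/l -muln2; lia.
rewrite card_gt0 => /set0Pn[i]; rewrite !inE => /andP[e1 e2].
have hi : i.+1 < size p by rewrite /= ltnS.
set c := take i.+1 p ++ rev (drop i.+1 p).
have cyc : cycle e c by apply: (cycle_build e_sym (x0 := x0)).
have pc : perm_eq c p.
  by rewrite /c -{3}(cat_take_drop i.+1 p) perm_cat2l perm_rev.
set C := [set u in p].
have CS : C \subset S by apply/subsetP => u; rewrite inE; exact: pS.
have C0 : C != set0 by apply/set0Pn; exists x0; rewrite inE mem_head.
have CnS : C != S.
  apply/eqP => CeS; move: hszS; rewrite -CeS cardsE (card_uniqP up); lia.
have [x [y [xC yD exy]]] := Hconn C CS C0 CnS.
move: yD; rewrite !inE => /andP[ynp yS].
move: xC; rewrite inE -(perm_mem pc) => xc.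
case: (rot_to xc) => j s' hrot.
have cyc' : cycle e (x :: s') by rewrite -hrot rot_cycle.
exists (y :: x :: s'); split.
- rewrite -hrot /= rot_uniq (perm_uniq pc) up andbT.
  by rewrite mem_rot (perm_mem pc).
- by move: cyc'; rewrite /= rcons_path (e_sym y x) exy => /andP[->].
- move=> u; rewrite inE => /orP[/eqP -> //|].
  by rewrite -hrot mem_rot (perm_mem pc) => /pS.
- by have := size_rot j c; rewrite hrot (perm_size pc) => <-.
Qed.

Lemma Ds_split (T : finType) (e : rel T) (e_sym : symmetric e) (S C : {set T}) :
  C \subset S -> (forall x y, x \in C -> y \in S :\: C -> e x y = false) ->
  Ds e S = Ds e C + Ds e (S :\: C).
Proof.
move=> CS Hno; rewrite /Ds (big_setID C) /=.
have -> : S :&: C = C by apply/setIidPr.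
congr addn; apply: eq_bigr => x xC; apply: eq_card => u; rewrite !inE.
- case: (boolP (u \in C)) => uC; first by rewrite (subsetP CS u uC).
  case: (boolP (u \in S)) => uS //=.
  by rewrite Hno // !inE uC uS.
- move: xC; rewrite !inE => /andP[xnC xS].
  case: (boolP (u \in C)) => uC //=; rewrite ?andbF //.
  by rewrite e_sym Hno ?andbF // !inE xnC xS.
Qed.

Lemma Ds_small (T : finType) (e : rel T) (e_irr : irreflexive e) (S : {set T}) :
  Ds e S <= #|S| * #|S|.-1.
Proof.
rewrite /Ds -sum_nat_const; apply: leq_sum => x xS.
by apply: (leq_trans (deg_le e_irr S x)); rewrite (cardsD1 x S) xS.
Qed.

Lemma EG (T : finType) (e : rel T) (e_sym : symmetric e) (e_irr : irreflexive e)
  (t : nat) (ht : 1 <= t)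
  (noP : forall p : seq T, uniq p -> sorted e p -> size p = t.*2 -> False) :
  forall S : {set T}, Ds e S <= (t - 1).*2 * #|S|.
Proof.
move=> S; have [n] := ubnP #|S|; elim: n S => // n IH S hS.
case: (leqP #|S| (t.*2).-1) => hsmall.
  apply: (leq_trans (Ds_small e_irr S)); rewrite mulnC leq_mul2r.
  apply/orP; right; move: hsmall; rewrite -!muln2; lia.
case: (boolP [exists v in S, deg_in e S v <= t - 1]).
  case/existsP => v /andP[vS hv].
  rewrite (Ds_del e_sym e_irr vS) (cardsD1 v S) vS.
  have := IH (S :\ v); rewrite (cardsD1 v S) vS in hS.
  move=> /(_ hS) H; rewrite mulnDr muln1 addnC; apply: leq_add => //.
  by rewrite leq_double.
move=> Hnd.
have Hdeg : forall v, v \in S -> t <= deg_in e S v.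
  move=> v vS; case: (leqP t (deg_in e S v)) => // hlt; case/negP: Hnd.
  by apply/existsP; exists v; rewrite vS /=; lia.
case: (Classical_Prop.classic (exists C : {set T}, [/\ C \subset S, C != set0, C != S &
          forall x y, x \in C -> y \in S :\: C -> e x y = false])).
  case=> C [CS C0 CnS Hno].
  have hC : #|C| < #|S|.
    have : C \proper S by rewrite properEneq CnS CS.
    by rewrite properEcard => /andP[].
  have hD : #|S :\: C| < #|S|.
    rewrite -(cardsID C S); have -> : S :&: C = C by apply/setIidPr.
    by move: C0; rewrite -card_gt0; lia.
  rewrite (Ds_split e_sym CS Hno) -(cardsID C S).
  have -> : S :&: C = C by apply/setIidPr.
  rewrite mulnDr; apply: leq_add; apply: IH; lia.
move=> Hnc.
have Hconn : forall C : {set T}, C \subset S -> C != set0 -> C != S ->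
           exists x y, [/\ x \in C, y \in S :\: C & e x y].
  move=> C CS C0 CnS.
  case: (Classical_Prop.classic (exists x y, [/\ x \in C, y \in S :\: C & e x y])) => // H.
  exfalso; apply: Hnc; exists C; split => // x y xC yD.
  apply/negbTE/negP => exy; apply: H; by exists x, y.
have Hm : forall m, 0 < m -> m <= t.*2 ->
    exists p : seq T, [/\ uniq p, sorted e p, {subset p <= S} & size p = m].
  elim=> [//|m IHm] _ hm.
  case: m IHm hm => [|m] IHm hm.
    have : 0 < #|S| by move: hsmall; rewrite -!muln2; lia.
    rewrite card_gt0 => /set0Pn[v vS].
    by exists [:: v]; split => // u; rewrite inE => /eqP ->.
  have [p [up sp pS szp]] := IHm isT (ltnW hm).
  have H := path_ext e_sym e_irr Hdeg Hconn up sp pS; rewrite szp in H.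
  have hsS : m.+1 < #|S| by move: hsmall hm; rewrite -!muln2; lia.
  have [p' [H1 H2 H3 H4]] := H isT hm hsS.
  by exists p'.
have [p [up sp _ szp]] := Hm t.*2 ltac:(rewrite -muln2; lia) (leqnn _).
by case: (noP p up sp szp).
Qed.

Lemma forest_of_path (T : finType) (e : rel T) (k : nat) (a : nat -> nat) (p : seq T) :
  uniq p -> sorted e p -> size p = (\sum_(i < k) a i).*2 -> contains_path_forest e k a.
Proof.
move=> up sp hp.
set sh := [seq (a i).*2 | i <- iota 0 k].
have hsum : sumn sh = (\sum_(i < k) a i).*2.
  rewrite /sh; have -> : iota 0 k = index_iota 0 k by rewrite /index_iota subn0.
  rewrite sumnE big_map big_mkord -!muln2 big_distrl /=.
  by apply: eq_bigr => i _; rewrite muln2.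
have hle : forall j, sumn (take j sh) <= sumn sh.
  by move=> j; rewrite -{2}(cat_take_drop j sh) sumn_cat leq_addr.
exists (reshape sh p); split.
- by rewrite size_reshape size_map size_iota.
- move=> i ik.
  have hnth : nth 0 sh i = (a i).*2 by rewrite (nth_map 0) ?size_iota // nth_iota.
  rewrite nth_reshape hnth; split; last by apply/take_sorted/drop_sorted.
  apply: size_takel; rewrite size_drop hp -hsum.
  have := hle i.+1; rewrite (take_nth 0) ?size_map ?size_iota // sumn_rcons hnth.
  lia.
- by rewrite reshapeKr // hsum hp.
Qed.

Theorem lemma3p2 (T : finType) (e : rel T)
  (e_sym : symmetric e) (e_irr : irreflexive e)
  (k : nat) (a : nat -> nat)
  (hk : 2 <= k)
  (ha_dec : forall i j, i <= j -> j < k -> a j <= a i)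
  (ha_pos : forall i, i < k -> 1 <= a i) :
  let t := \sum_(i < k) a i in
  t ^ 2 - t - 1 < #|T| ->
  ~ contains_path_forest e k a ->
  (t - 1) * #|T| <= num_edges e + (t ^ 2 - t - 1) ->
  exists S : {set T},
    [/\ #|T| <= #|S| + (t ^ 2 - t - 1),
        (forall v, v \in S -> t - 1 <= deg_in e S v)
      & (forall v, v \notin S -> deg_in e S v <= t - 2)].
Proof.
move=> t _ hnf hE.
have ht : 2 <= t.
  have : \sum_(i < k) 1 <= t by apply: leq_sum => i _; exact: ha_pos.
  by rewrite sum_nat_const card_ord muln1; lia.
have noP : forall p : seq T, uniq p -> sorted e p -> size p = t.*2 -> False.
  by move=> p up sp hp; apply: hnf; exact: forest_of_path up sp hp.
have hEG := EG e_sym e_irr (ltnW ht) noP.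
set good := fun C : {set T} => [forall v in C, t - 1 <= deg_in e C v].
set S := \bigcup_(C | good C) C.
have maxl : forall C, good C -> C \subset S.
  by move=> C gC; apply: (bigcup_sup C gC).
have goodS : forall v, v \in S -> t - 1 <= deg_in e S v.
  move=> v /bigcupP[C gC vC].
  apply: (leq_trans _ (deg_sub e v (maxl C gC))).
  by move/forall_inP: gC; apply.
have out : forall v, v \notin S -> deg_in e S v <= t - 2.
  move=> v vS; case: (leqP (t - 1) (deg_in e S v)) => [hv|]; last by lia.
  exfalso; move/negP: vS; apply.
  have : v |: S \subset S.
    apply: maxl; apply/forall_inP => u; rewrite !inE => /orP[/eqP ->|uS].
      by apply: (leq_trans hv); apply: deg_sub; apply/subsetP => x xS; rewrite inE xS orbT.
    apply: (leq_trans (goodS u uS)); apply: deg_sub.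
    by apply/subsetP => x xS; rewrite inE xS orbT.
  by move/subsetP; apply; rewrite !inE eqxx.
have peel : forall U : {set T}, S \subset U ->
    Ds e U <= Ds e S + ((t - 2) * #|U :\: S|).*2.
  move=> U; have [n] := ubnP #|U :\: S|; elim: n U => // n IH U hn SU.
  case: (boolP (U :\: S == set0)) => [|hne].
    rewrite setD_eq0 => US.
    have -> : U = S by apply/eqP; rewrite eqEsubset US SU.
    by rewrite leq_addr.
  have ngU : ~~ good U.
    apply/negP => gU; move: hne; rewrite setD_eq0 => /negP; apply; exact: maxl.
  case/forall_inPn: ngU => v vU; rewrite -ltnNge => hv.
  have vnS : v \notin S.
    apply/negP => vS; have := goodS v vS.
    have := deg_sub e v SU; lia.
  have SU' : S \subset U :\ v.
    apply/subsetP => x xS; rewrite !inE (subsetP SU x xS) andbT.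
    by apply/eqP => xv; subst x; rewrite xS in vnS.
  have hcard : #|U :\: S| = (#|(U :\ v) :\: S|).+1.
    rewrite (cardsD1 v (U :\: S)) !inE vnS vU /= add1n; congr _.+1.
    by apply: eq_card => x; rewrite !inE; case: (x == v); case: (x \in S).
  have := IH (U :\ v); rewrite -hcard => /(_ hn SU') H.
  rewrite (Ds_del e_sym e_irr vU) hcard mulnS doubleD.
  have : (deg_in e U v).*2 <= (t - 2).*2 by rewrite leq_double; lia.
  lia.
exists S; split => //.
have h1 := peel setT (subsetT S).
have h2 := hEG S.
have h3 := handshake e_sym e_irr.
have hc := cardsC S.
rewrite setTD in h1.
move: h1 h2 h3 hc hE.
set m := #|S|; set d := #|~: S|; set n := #|T|; set E := num_edges e; set c := t ^ 2 - t - 1.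
move: (Ds e S) (Ds e setT) => DS DT.
rewrite -!muln2.
move=> h1 h2 h3 hc hE.
clearbody t; have [t' Ht] : exists t', t = t'.+2 by exists (t - 2); lia.
subst t.
move: h1 h2 h3 hE; rewrite !subSS subn0 -hc => h1 h2 h3 hE.
nia.
Qed.
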